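(* In the setting below, for each $v\in\mathbb{R}^d$ and $n\in\mathbb{N}_0$, $$\min_{j=1,\dots,N}\langle x_j(t_{2n+2}),v\rangle\le\langle x_i(t),v\rangle\le\max_{j=1,\dots,N}\langle x_j(t_{2n+2}),v\rangle$$ for all $t\in[t_{2n+1},t_{2n+2}]$ and $i=1,\dots,N$.
   Context: Setting: $N\ge2$; $\psi:\mathbb{R}^d\times\mathbb{R}^d\to\mathbb{R}$ positive, bounded, continuous, $K:=\|\psi\|_\infty$; $\{t_n\}_{n\in\mathbb{N}_0}$ increasing, nonnegative, $t_0=0$, $t_n\to\infty$; $\alpha(0)=1$, $\alpha=1$ on $(t_{2n},t_{2n+1})$, $\alpha=-1$ on $[t_{2n+1},t_{2n+2}]$; $\{x_i\}$ solves $x_i'(t)=\frac1{N-1}\sum_{j\ne i}\alpha(t)\psi(x_i(t),x_j(t))(x_j(t)-x_i(t))$, $t>0$, $x_i(0)=x_i^0\in\mathbb{R}^d$ (continuous, $C^1$ on each $(t_n,t_{n+1})$). Standing assumptions: $t_{2n+2}-t_{2n+1}<\frac{\ln 2}{K}$ for all $n$; $\sum_{p\ge0}\ln\frac{e^{K(t_{2p+2}-t_{2p+1})}}{2-e^{K(t_{2p+2}-t_{2p+1})}}<\infty$; $\sum_{p\ge0}\ln\max\{1-e^{-K(t_{2p+1}-t_{2p})},1-\frac{\psi_0}{K}(1-e^{-K(t_{2p+1}-t_{2p})})\}=-\infty$, with $\psi_0=\min_{|y|,|z|\le M^0}\psi(y,z)$, $M^0=e^{K\sum_{p}(t_{2p+2}-t_{2p+1})}\max_i|x_i^0|$.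 *)

(* Defs.v *)
From Stdlib Require Import Reals Lra.
From Coquelicot Require Import Coquelicot.
Open Scope R_scope.

(* A point of R^d is represented by  nat -> R ; only coordinates k < d matter. *)
Definition vec := nat -> R.

Fixpoint sum_first (n : nat) (f : nat -> R) : R :=
  match n with O => 0 | S m => sum_first m f + f m end.
Definition inner (d : nat) (x y : vec) : R := sum_first d (fun k => x k * y k).
Definition vnorm (d : nat) (x : vec) : R := sqrt (inner d x x).

Fixpoint max_upto (f : nat -> R) (n : nat) : R :=
  match n with O => f O | S m => Rmax (max_upto f m) (f (S m)) end.
Fixpoint min_upto (f : nat -> R) (n : nat) : R :=
  match n with O => f O | S m => Rmin (min_upto f m) (f (S m)) end.

Definition psi_continuous (d : nat) (psi : vec -> vec -> R) : Prop :=
  forall (y z : vec) (eps : R), 0 < eps -> exists delta, 0 < delta /\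
    forall y' z' : vec, (forall k, (k < d)%nat -> Rabs (y' k - y k) < delta /\ Rabs (z' k - z k) < delta) ->
      Rabs (psi y' z' - psi y z) < eps.

(* K = ||psi||_oo (psi positive, so sup |psi| = sup psi) *)
Definition is_sup_norm (psi : vec -> vec -> R) (K : R) : Prop :=
  (forall y z, Rabs (psi y z) <= K) /\
  (forall eps, 0 < eps -> exists y z, K - eps < Rabs (psi y z)).

Definition is_alpha (t : nat -> R) (alpha : R -> R) : Prop :=
  alpha 0 = 1 /\
  (forall n s, t (2 * n)%nat < s < t (2 * n + 1)%nat -> alpha s = 1) /\
  (forall n s, t (2 * n + 1)%nat <= s <= t (2 * n + 2)%nat -> alpha s = -1).

Definition rhs (N : nat) (alpha : R -> R) (psi : vec -> vec -> R)
  (x : nat -> R -> vec) (i : nat) (s : R) (k : nat) : R :=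
  / INR (N - 1) *
  sum_first N (fun j => if (j =? i)%nat then 0
                  else alpha s * psi (x i s) (x j s) * (x j s k - x i s k)).

Definition is_solution (N d : nat) (t : nat -> R) (alpha : R -> R)
  (psi : vec -> vec -> R) (x0 : nat -> vec) (x : nat -> R -> vec) : Prop :=
  forall i, (i < N)%nat ->
    (forall k, (k < d)%nat -> x i 0 k = x0 i k) /\
    (forall k, (k < d)%nat ->
       filterlim (fun s => x i s k) (at_right 0) (locally (x i 0 k)) /\
       (forall s, 0 < s -> continuous (fun u => x i u k) s) /\
       (forall n s, t n < s < t (S n) ->
          is_derive (fun u => x i u k) s (rhs N alpha psi x i s k))).

Definition M0 (N d : nat) (t : nat -> R) (K : R) (x0 : nat -> vec) : R :=
  exp (K * Series (fun p => t (2 * p + 2)%nat - t (2 * p + 1)%nat)) *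
  max_upto (fun i => vnorm d (x0 i)) (N - 1).

Definition is_min_on_ball (d : nat) (psi : vec -> vec -> R) (M : R) (psi0 : R) : Prop :=
  (exists y z, vnorm d y <= M /\ vnorm d z <= M /\ psi y z = psi0) /\
  (forall y z, vnorm d y <= M -> vnorm d z <= M -> psi0 <= psi y z).

(* Main.v *)
Require Import Defs.
From Stdlib Require Import Reals Lra Lia Classical.
From Coquelicot Require Import Coquelicot.
Open Scope R_scope.

Definition ctn (f : R -> R) (c : R) := forall eps, 0 < eps -> exists del, 0 < del /\
  forall u, Rabs (u - c) < del -> Rabs (f u - f c) < eps.

Lemma cont_ctn f c : continuous f c -> ctn f c.
Proof.
  intros H eps Heps.
  destruct (H _ (locally_ball (f c) (mkposreal eps Heps))) as [del Hd].
  exists del. split; [apply cond_pos|]. intros u Hu. exact (Hd u Hu).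
Qed.

Lemma deriv_right f c l : is_derive f c l -> forall eps, 0 < eps ->
  exists del, 0 < del /\ forall h, 0 < h < del -> f (c + h) - f c > (l - eps) * h.
Proof.
  intros H eps He. apply is_derive_Reals in H. destruct (H eps He) as [del Hd].
  exists del. split; [apply cond_pos|]. intros h [h0 h1].
  assert (Hh := Hd h (Rgt_not_eq _ _ h0) ltac:(rewrite Rabs_pos_eq; lra)).
  set (q := (f (c + h) - f c) / h) in Hh.
  assert (E : f (c + h) - f c = q * h) by (unfold q; field; lra).
  rewrite E. apply Rmult_lt_compat_r; [lra|].
  apply Rabs_def2 in Hh. lra.
Qed.

Lemma sum_first_ext n f g : (forall k, (k < n)%nat -> f k = g k) -> sum_first n f = sum_first n g.
Proof. induction n; simpl; intros H; auto. rewrite IHn by (intros; apply H; lia). rewrite H by lia. auto. Qed.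

Lemma sum_first_lin n a b f g : sum_first n (fun k => a * f k + b * g k) = a * sum_first n f + b * sum_first n g.
Proof. induction n; simpl. ring. rewrite IHn. ring. Qed.

Lemma sum_first_plus n f g : sum_first n (fun k => f k + g k) = sum_first n f + sum_first n g.
Proof. induction n; simpl. ring. rewrite IHn. ring. Qed.

Lemma sum_first_scal n a f : sum_first n (fun k => a * f k) = a * sum_first n f.
Proof. induction n; simpl. ring. rewrite IHn. ring. Qed.

Lemma sum_first_multr n a f : sum_first n f * a = sum_first n (fun k => f k * a).
Proof. induction n; simpl. ring. rewrite <- IHn. ring. Qed.

Lemma sum_first_zero n : sum_first n (fun _ => 0) = 0.
Proof. induction n; simpl. ring. rewrite IHn. ring. Qed.

Lemma sum_first_swap d N (f : nat -> nat -> R) :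
  sum_first d (fun k => sum_first N (fun m => f m k)) = sum_first N (fun m => sum_first d (fun k => f m k)).
Proof. induction d; simpl. symmetry; apply sum_first_zero. rewrite IHd, <- sum_first_plus. auto. Qed.

Lemma sum_first_nonneg n f : (forall k, (k < n)%nat -> 0 <= f k) -> 0 <= sum_first n f.
Proof. induction n; simpl; intros H. lra. assert (H1 := H n ltac:(lia)). assert (0 <= sum_first n f) by (apply IHn; intros; apply H; lia). lra. Qed.

Lemma inner_opp d a v : inner d a (fun k => - v k) = - inner d a v.
Proof. unfold inner. induction d; simpl. ring. rewrite IHd. ring. Qed.

Lemma max_upto_ge f n j : (j <= n)%nat -> f j <= max_upto f n.
Proof.
  induction n; intros H; simpl.
  - replace j with O by lia. lra.
  - destruct (Nat.eq_dec j (S n)) as [->|Hn]. apply Rmax_r.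
    eapply Rle_trans; [apply IHn; lia| apply Rmax_l].
Qed.

Lemma max_upto_ext f g n : (forall j, f j = g j) -> max_upto f n = max_upto g n.
Proof. intros H; induction n; simpl; rewrite ?IHn, ?H; auto. Qed.

Lemma min_max f n : min_upto f n = - max_upto (fun j => - f j) n.
Proof.
  induction n; simpl. ring. rewrite IHn.
  unfold Rmin, Rmax. destruct (Rle_dec _ _), (Rle_dec _ _); lra.
Qed.

Lemma cont_sum (g : nat -> R -> R) d c :
  (forall k, (k < d)%nat -> continuous (g k) c) -> continuous (fun u => sum_first d (fun k => g k u)) c.
Proof.
  induction d; simpl; intros H.
  - apply continuous_const.
  - apply (continuous_plus (fun u => sum_first d (fun k => g k u)) (g d)).
    apply IHd; intros; apply H; lia. apply H; lia.
Qed.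

Lemma deriv_sum (g : nat -> R -> R) (dg : nat -> R) d c :
  (forall k, (k < d)%nat -> is_derive (g k) c (dg k)) -> is_derive (fun u => sum_first d (fun k => g k u)) c (sum_first d dg).
Proof.
  induction d; simpl; intros H.
  - apply (is_derive_const 0 c).
  - apply (is_derive_plus (fun u => sum_first d (fun k => g k u)) (g d)).
    apply IHd; intros; apply H; lia. apply H; lia.
Qed.
Section Bar.
Variables (N : nat) (y : nat -> R -> R) (T1 T2 C e : R).
Hypothesis He : 0 < e.
Let B u := C + e * (T2 - u) + e.

Lemma below_near f c : ctn f c -> f c < B c -> exists del, 0 < del /\ forall u, Rabs (u - c) < del -> f u < B u.
Proof.
  intros Hc Hlt. set (eta := (B c - f c) / 2).
  destruct (Hc eta ltac:(unfold eta; lra)) as [d1 [Hd1 Hd]].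
  exists (Rmin d1 (eta / e)). split. apply Rmin_pos; auto. apply Rdiv_lt_0_compat; unfold eta; lra.
  intros u Hu. assert (H1 := Hd u ltac:(eapply Rlt_le_trans; [exact Hu| apply Rmin_l])).
  assert (H2 : Rabs (u - c) < eta / e) by (eapply Rlt_le_trans; [exact Hu| apply Rmin_r]).
  apply Rabs_def2 in H1. apply Rabs_def2 in H2.
  assert (H3 : e * (u - c) < e * (eta / e)) by (apply Rmult_lt_compat_l; lra).
  replace (e * (eta / e)) with eta in H3 by (field; lra).
  unfold B in *. unfold eta in *. lra.
Qed.

Lemma above_near f c : ctn f c -> B c < f c -> exists del, 0 < del /\ forall u, Rabs (u - c) < del -> B u < f u.
Proof.
  intros Hc Hlt. set (eta := (f c - B c) / 2).
  destruct (Hc eta ltac:(unfold eta; lra)) as [d1 [Hd1 Hd]].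
  exists (Rmin d1 (eta / e)). split. apply Rmin_pos; auto. apply Rdiv_lt_0_compat; unfold eta; lra.
  intros u Hu. assert (H1 := Hd u ltac:(eapply Rlt_le_trans; [exact Hu| apply Rmin_l])).
  assert (H2 : Rabs (u - c) < eta / e) by (eapply Rlt_le_trans; [exact Hu| apply Rmin_r]).
  apply Rabs_def2 in H1. apply Rabs_def2 in H2.
  assert (H3 : e * (c - u) < e * (eta / e)) by (apply Rmult_lt_compat_l; lra).
  replace (e * (eta / e)) with eta in H3 by (field; lra).
  unfold B in *. unfold eta in *. lra.
Qed.

Lemma near_all c : forall m, (forall j, (j < m)%nat -> ctn (y j) c /\ y j c < B c) ->
  exists del, 0 < del /\ forall j u, (j < m)%nat -> Rabs (u - c) < del -> y j u < B u.
Proof.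
  induction m; intros H.
  - exists 1. split. lra. intros; lia.
  - destruct IHm as [d1 [Hd1 Hd]]. intros; apply H; lia.
    destruct (H m ltac:(lia)) as [Hc Hl]. destruct (below_near _ _ Hc Hl) as [d2 [Hd2 Hd']].
    exists (Rmin d1 d2). split. apply Rmin_pos; auto.
    intros j u Hj Hu. destruct (Nat.eq_dec j m) as [->|Hn].
    + apply Hd'. eapply Rlt_le_trans; [exact Hu| apply Rmin_r].
    + apply Hd. lia. eapply Rlt_le_trans; [exact Hu| apply Rmin_l].
Qed.

Hypothesis HT : T1 < T2.
Hypothesis Hct : forall j u, (j < N)%nat -> T1 <= u <= T2 -> ctn (y j) u.
Hypothesis Hder : forall j u, (j < N)%nat -> T1 < u < T2 -> (forall k, (k < N)%nat -> y k u <= y j u) ->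
  exists l, 0 <= l /\ is_derive (y j) u l.
Hypothesis HC : forall j, (j < N)%nat -> y j T2 <= C.

Lemma barrier_eps j0 u0 : (j0 < N)%nat -> T1 < u0 <= T2 -> y j0 u0 < B u0.
Proof.
  intros Hj0 Hu0. apply Rnot_le_lt; intro Hge.
  set (S := fun u => u0 <= u <= T2 /\ exists j, (j < N)%nat /\ B u <= y j u).
  destruct (completeness S) as [c [Hub Hlub]].
  { exists T2. intros u [Hu _]. lra. }
  { exists u0. split. lra. exists j0; auto. }
  assert (Hu0c : u0 <= c) by (apply Hub; split; [lra| exists j0; auto]).
  assert (HcT : c <= T2) by (apply Hlub; intros u [Hu _]; lra).
  assert (HA : exists j, (j < N)%nat /\ B c <= y j c).
  { destruct (classic (exists j, (j < N)%nat /\ B c <= y j c)) as [H|H]; auto.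
    destruct (near_all c N) as [del [Hdel Hd]].
    { intros j Hj. split. apply Hct; [auto| lra].
      apply Rnot_le_lt. intro. apply H. exists j; auto. }
    assert (Hn : ~ is_upper_bound S (c - del)) by (intro Hb; apply Hlub in Hb; lra).
    apply not_all_ex_not in Hn. destruct Hn as [u Hu].
    apply imply_to_and in Hu. destruct Hu as [Su Hu].
    assert (u <= c) by (apply Hub; auto).
    destruct Su as [_ [j [Hj Hj']]].
    assert (y j u < B u) by (apply Hd; auto; apply Rabs_def1; lra). lra. }
  destruct HA as [j [Hj Hjc]].
  assert (HcT' : c < T2).
  { destruct (Rle_lt_or_eq_dec _ _ HcT) as [H|H]; auto. subst c. assert (H := HC j Hj). unfold B in Hjc. lra. }
  assert (HD : forall k, (k < N)%nat -> y k c <= B c).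
  { intros k Hk. apply Rnot_lt_le. intro Hlt.
    destruct (above_near (y k) c ltac:(apply Hct; [auto| lra]) Hlt) as [del [Hdel Hd]].
    set (h := Rmin del (T2 - c) / 2).
    assert (Hh1 : 0 < h) by (unfold h; assert (0 < Rmin del (T2 - c)) by (apply Rmin_pos; lra); lra).
    assert (Hh2 : h < del) by (unfold h; assert (Rmin del (T2 - c) <= del) by apply Rmin_l; lra).
    assert (Hh3 : h < T2 - c) by (unfold h; assert (Rmin del (T2 - c) <= T2 - c) by apply Rmin_r; lra).
    assert (S (c + h)).
    { split. lra. exists k. split; auto. left. apply Hd. rewrite Rabs_pos_eq; lra. }
    apply Hub in H. lra. }
  destruct (Hder j c Hj ltac:(lra) ltac:(intros k Hk; eapply Rle_trans; [apply HD; auto| auto])) as [l [Hl Hdl]].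
  destruct (deriv_right _ _ _ Hdl (e / 2) ltac:(lra)) as [del [Hdel Hd]].
  set (h := Rmin del (T2 - c) / 2).
  assert (Hh1 : 0 < h) by (unfold h; assert (0 < Rmin del (T2 - c)) by (apply Rmin_pos; lra); lra).
  assert (Hh2 : h < del) by (unfold h; assert (Rmin del (T2 - c) <= del) by apply Rmin_l; lra).
  assert (Hh3 : h < T2 - c) by (unfold h; assert (Rmin del (T2 - c) <= T2 - c) by apply Rmin_r; lra).
  assert (Hy := Hd h ltac:(lra)).
  assert (0 <= l * h) by (apply Rmult_le_pos; lra).
  assert (S (c + h)).
  { split. lra. exists j. split; auto. unfold B in *. nra. }
  apply Hub in H0. lra.
Qed.
End Bar.

Lemma barrier (N : nat) (y : nat -> R -> R) (T1 T2 C : R) :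
  T1 < T2 ->
  (forall j u, (j < N)%nat -> T1 <= u <= T2 -> ctn (y j) u) ->
  (forall j u, (j < N)%nat -> T1 < u < T2 -> (forall k, (k < N)%nat -> y k u <= y j u) ->
     exists l, 0 <= l /\ is_derive (y j) u l) ->
  (forall j, (j < N)%nat -> y j T2 <= C) ->
  forall j u, (j < N)%nat -> T1 <= u <= T2 -> y j u <= C.
Proof.
  intros HT Hct Hder HC.
  assert (Hint : forall j u, (j < N)%nat -> T1 < u <= T2 -> y j u <= C).
  { intros j u Hj Hu. apply Rnot_lt_le. intro Hlt.
    set (e := (y j u - C) / (2 * (T2 - u + 1))).
    assert (He : 0 < e) by (unfold e; apply Rdiv_lt_0_compat; lra).
    assert (H := barrier_eps N y T1 T2 C e He Hct Hder HC j u Hj Hu).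
    assert (E : e * (T2 - u) + e = (y j u - C) / 2) by (unfold e; field; lra).
    lra. }
  intros j u Hj Hu. destruct (Rle_lt_or_eq_dec _ _ (proj1 Hu)) as [H|H].
  - apply Hint; auto; lra.
  - subst u. apply Rnot_lt_le. intro Hlt.
    destruct (Hct j T1 Hj ltac:(lra) (y j T1 - C) ltac:(lra)) as [del [Hdel Hd]].
    set (h := Rmin del (T2 - T1) / 2).
    assert (Hh1 : 0 < h) by (unfold h; assert (0 < Rmin del (T2 - T1)) by (apply Rmin_pos; lra); lra).
    assert (Hh2 : h < del) by (unfold h; assert (Rmin del (T2 - T1) <= del) by apply Rmin_l; lra).
    assert (Hh3 : h < T2 - T1) by (unfold h; assert (Rmin del (T2 - T1) <= T2 - T1) by apply Rmin_r; lra).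
    assert (H1 := Hd (T1 + h) ltac:(rewrite Rabs_pos_eq; lra)).
    assert (H2 := Hint j (T1 + h) Hj ltac:(lra)).
    apply Rabs_def2 in H1. lra.
Qed.

Lemma t_nonneg (t : nat -> R) : t O = 0 -> (forall n, t n < t (S n)) -> forall m, 0 <= t m.
Proof. intros H0 Hi; induction m. lra. specialize (Hi m). lra. Qed.

Lemma max_side
  (N d : nat) (psi : vec -> vec -> R) (t : nat -> R) (alpha : R -> R)
  (x0 : nat -> vec) (x : nat -> R -> vec)
  (HN : (2 <= N)%nat)
  (Hpos : forall y z, 0 < psi y z)
  (Ht0 : t O = 0)
  (Hincr : forall n, t n < t (S n))
  (Halpha : is_alpha t alpha)
  (Hsol : is_solution N d t alpha psi x0 x) :
  forall (v : vec) (n : nat) (s : R) (i : nat),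
    t (2 * n + 1)%nat <= s <= t (2 * n + 2)%nat -> (i < N)%nat ->
    inner d (x i s) v <= max_upto (fun j => inner d (x j (t (2 * n + 2)%nat)) v) (N - 1).
Proof.
  intros v n s i Hs Hi.
  assert (E2 : (2 * n + 2)%nat = S (2 * n + 1)) by lia.
  assert (HT : t (2 * n + 1)%nat < t (2 * n + 2)%nat) by (rewrite E2; apply Hincr).
  assert (HT1 : 0 < t (2 * n + 1)%nat).
  { replace (2 * n + 1)%nat with (S (2 * n)) by lia.
    assert (H := t_nonneg t Ht0 Hincr (2 * n)). specialize (Hincr (2 * n)%nat). lra. }
  apply (barrier N (fun j u => inner d (x j u) v) (t (2 * n + 1)%nat) (t (2 * n + 2)%nat)); auto.
  - intros j u Hj Hu. apply cont_ctn. unfold inner.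
    apply (cont_sum (fun k u => x j u k * v k)). intros k Hk.
    apply (continuous_mult (fun u => x j u k) (fun _ => v k)); [|apply continuous_const].
    destruct (Hsol j Hj) as [_ H]. destruct (H k Hk) as [_ [H2 _]]. apply H2. lra.
  - intros j u Hj Hu Hmax.
    assert (Hal : alpha u = -1) by (apply (proj2 (proj2 Halpha) n); lra).
    exists (sum_first d (fun k => rhs N alpha psi x j u k * v k)). split.
    + assert (Eq : sum_first d (fun k => rhs N alpha psi x j u k * v k) =
        / INR (N - 1) * sum_first N (fun m => if (m =? j)%nat then 0 else
           alpha u * psi (x j u) (x m u) * (inner d (x m u) v - inner d (x j u) v))).
      { unfold rhs.
        transitivity (sum_first d (fun k => / INR (N - 1) * sum_first N (fun m =>
            (if (m =? j)%nat then 0 else alpha u * psi (x j u) (x m u) * (x m u k - x j u k)) * v k))).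
        { apply sum_first_ext; intros k Hk. rewrite Rmult_assoc, sum_first_multr. auto. }
        rewrite sum_first_scal, sum_first_swap. f_equal.
        apply sum_first_ext; intros m Hm. destruct (m =? j)%nat.
        - transitivity (sum_first d (fun _ => 0)); [apply sum_first_ext; intros; ring | apply sum_first_zero].
        - unfold inner. set (a := alpha u * psi (x j u) (x m u)).
          replace (a * (sum_first d (fun k => x m u k * v k) - sum_first d (fun k => x j u k * v k)))
            with (a * sum_first d (fun k => x m u k * v k) + (- a) * sum_first d (fun k => x j u k * v k)) by ring.
          rewrite <- sum_first_lin. apply sum_first_ext; intros; ring. }
      rewrite Eq. apply Rmult_le_pos.
      * left. apply Rinv_0_lt_compat. apply lt_0_INR. lia.
      * apply sum_first_nonneg. intros m Hm. destruct (m =? j)%nat. lra.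
        rewrite Hal. assert (H1 := Hpos (x j u) (x m u)). assert (H2 := Hmax m Hm). nra.
    + apply (deriv_sum (fun k u => x j u k * v k) (fun k => rhs N alpha psi x j u k * v k)).
      intros k Hk.
      apply (is_derive_scal_l (fun u => x j u k) u _ (v k)).
      destruct (Hsol j Hj) as [_ H]. destruct (H k Hk) as [_ [_ H3]].
      apply (H3 (2 * n + 1)%nat). rewrite <- E2. lra.
  - intros j Hj. apply (max_upto_ge (fun j => inner d (x j (t (2 * n + 2)%nat)) v)). lia.
Qed.

Theorem lemma3p4
  (N d : nat) (psi : vec -> vec -> R) (K psi0 : R) (t : nat -> R) (alpha : R -> R)
  (x0 : nat -> vec) (x : nat -> R -> vec)
  (HN : (2 <= N)%nat)
  (Hpos : forall y z, 0 < psi y z)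
  (Hcont : psi_continuous d psi)
  (HK : is_sup_norm psi K)
  (Ht0 : t O = 0)
  (Hincr : forall n, t n < t (S n))
  (Hinf : forall M, exists n, M < t n)
  (Halpha : is_alpha t alpha)
  (Hsol : is_solution N d t alpha psi x0 x)
  (Hpsi0 : is_min_on_ball d psi (M0 N d t K x0) psi0)
  (A1 : forall n, t (2 * n + 2)%nat - t (2 * n + 1)%nat < ln 2 / K)
  (A2 : ex_series (fun p =>
          ln (exp (K * (t (2 * p + 2)%nat - t (2 * p + 1)%nat)) /
              (2 - exp (K * (t (2 * p + 2)%nat - t (2 * p + 1)%nat))))))
  (A3 : is_lim_seq (sum_n (fun p =>
          ln (Rmax (1 - exp (- K * (t (2 * p + 1)%nat - t (2 * p)%nat)))
                   (1 - psi0 / K * (1 - exp (- K * (t (2 * p + 1)%nat - t (2 * p)%nat)))))))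
          m_infty) :
  forall (v : vec) (n : nat) (s : R) (i : nat),
    t (2 * n + 1)%nat <= s <= t (2 * n + 2)%nat -> (i < N)%nat ->
    min_upto (fun j => inner d (x j (t (2 * n + 2)%nat)) v) (N - 1) <= inner d (x i s) v /\
    inner d (x i s) v <= max_upto (fun j => inner d (x j (t (2 * n + 2)%nat)) v) (N - 1).
Proof.
  intros v n s i Hs Hi. split.
  - assert (H := max_side N d psi t alpha x0 x HN Hpos Ht0 Hincr Halpha Hsol (fun k => - v k) n s i Hs Hi).
    rewrite inner_opp in H.
    rewrite (max_upto_ext _ (fun j => - inner d (x j (t (2 * n + 2)%nat)) v)) in H
      by (intros; apply inner_opp).
    rewrite min_max. lra.
  - exact (max_side N d psi t alpha x0 x HN Hpos Ht0 Hincr Halpha Hsol v n s i Hs Hi).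
Qed.
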